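(* Let $(H_n)_{n\ge0}$ be the monic Hermite polynomials ($H_0=1$, $H_{-1}=0$, $H_n=xH_{n-1}-\tfrac{n-1}{2}H_{n-2}$), with $H_n(x)=\sum_{i=0}^nb_{n,i}x^i$ (convention $b_{m,m}=1$, $b_{m,l}=0$ for $l>m$). For integers $n\ge k\ge1$ and $0\le t\le k-1$ let $E_{k,n,t}$ be the determinant of the $(k-t-1)\times(k-t-1)$ matrix with $(\rho,c)$ entry $b_{n-k+t+1+c,\;n-k+t+\rho}$ (with $E_{k,n,k-1}=1$). Then for integers $j\ge0$, $r\ge1$ with $j+r\le k$, $$E_{k,n,j+r-1}=\begin{cases}0,& k-j-r \text{ odd},\\[2pt] \dfrac{n!}{(n-k+j+r)!\,\left(\frac{k-j-r}{2}\right)!\,2^{k-j-r}},& k-j-r\text{ even}.\end{cases}$$ *)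

(* Defs.v *)
From mathcomp Require Import all_boot all_order all_algebra.
Set Implicit Arguments. Unset Strict Implicit. Unset Printing Implicit Defensive.
Import Order.TTheory GRing.Theory Num.Theory.
Local Open Scope ring_scope.

(* Pair (H_n, H_{n+1}) of monic Hermite polynomials over rat:
   H_0 = 1, H_1 = x (from H_{-1} = 0), H_{n+2} = x H_{n+1} - (n+1)/2 H_n. *)
Fixpoint herm_pair (n : nat) : {poly rat} * {poly rat} :=
  match n with
  | 0 => (1, 'X)
  | m.+1 => let: (p, q) := herm_pair m in
            (q, 'X * q - ((m.+1)%:R / 2%:R) *: p)
  end.

Definition herm (n : nat) : {poly rat} := (herm_pair n).1.

(* b_{n,i} : coefficient of x^i in H_n (automatically 0 for i > n). *)
Definition hb (n i : nat) : rat := (herm n)`_i.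

(* E_{k,n,t}: determinant of the (k-t-1)x(k-t-1) matrix whose (rho,c) entry,
   rho, c in {1,...,k-t-1}, is b_{n-k+t+1+c, n-k+t+rho}.
   (0-based ordinals rho', c' correspond to rho = rho'+1, c = c'+1.)
   For t = k-1 this is the empty determinant, = 1. *)
Definition Ekn (k n t : nat) : rat :=
  \det (\matrix_(rho < (k - t - 1)%N, c < (k - t - 1)%N)
          hb (n - k + t + 1 + c.+1)%N (n - k + t + rho.+1)%N).

(* Main.v *)
Require Import Defs.
From mathcomp Require Import all_boot all_order all_algebra.
From mathcomp Require Import ring lra zify.
Import Order.TTheory GRing.Theory Num.Theory.
Local Open Scope ring_scope.

Lemma herm0 : herm 0 = 1. Proof. by []. Qed.
Lemma hermS p : herm p.+1 = (herm_pair p).2.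
Proof. by rewrite /herm /=; case: (herm_pair p). Qed.
Lemma hermSS p : herm p.+2 = 'X * herm p.+1 - ((p.+1)%:R / 2%:R) *: herm p.
Proof. by rewrite hermS /= hermS /herm; case: (herm_pair p). Qed.
Lemma herm1 : herm 1 = 'X. Proof. by rewrite hermS. Qed.

Lemma Xherm p : 'X * herm p = herm p.+1 + (p%:R / 2%:R) *: herm p.-1.
Proof.
case: p => [|p]; first by rewrite herm0 herm1 mulr1 mul0r scale0r addr0.
by rewrite hermSS subrK.
Qed.

Lemma hb_top p : hb p p = 1 /\ forall l, (p < l)%N -> hb p l = 0.
Proof.
elim/ltn_ind: p => -[|[|p]] IH.
- rewrite /hb herm0; split=> [|l]; first by rewrite coefC.
  by case: l => // l _; rewrite coefC.
- rewrite /hb herm1; split=> [|l]; first by rewrite coefX.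
  by case: l => [|[|l]] // _; rewrite coefX.
- have [H1 H1'] := IH p.+1 (ltnSn _).
  have [H0 H0'] := IH p (ltnW (ltnSn _)).
  rewrite /hb hermSS; split.
    rewrite coefB coefXM coefZ /=. rewrite -!/(hb _ _) H1 H0' ?mulr0 ?subr0 //.
    idtac.
  move=> l Hl; rewrite coefB coefXM coefZ /=.
  case: l Hl => // l Hl.
  rewrite -!/(hb _ _) H1' // H0' ?mulr0 ?subr0 //. by apply: ltn_trans Hl.
Qed.

Lemma hbpp p : hb p p = 1. Proof. by case: (hb_top p). Qed.
Lemma hb_gt p l : (p < l)%N -> hb p l = 0. Proof. by move=> H; case: (hb_top p) => _ ->. Qed.

Fixpoint dco (N : nat) : nat -> rat :=
  match N with
  | 0 => fun q => (q == 0%N)%:R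
  | N'.+1 => fun q => (if q is q'.+1 then dco N' q' else 0)
                      + (q.+1)%:R / 2%:R * dco N' q.+1
  end.

Lemma dco_gt N q : (N < q)%N -> dco N q = 0.
Proof.
elim: N q => [|N IH] q H; first by case: q H.
case: q H => [//|q] H /=.
rewrite IH ?IH ?mulr0 ?addr0 //; lia.
Qed.

Lemma Xn_expand N K : (N < K)%N -> 'X^N = \sum_(0 <= p < K) dco N p *: herm p.
Proof.
elim: N K => [|N IH] K HK.
  case: K HK => // K _; rewrite big_nat_recl //= scale1r herm0 expr0.
  rewrite big1 ?addr0 // => i _; by rewrite scale0r.
case: K HK => // K HK.
rewrite exprS (IH K.+1) ?(ltnW HK) // mulr_sumr.
under eq_bigr => p _ do rewrite -scalerAr Xherm scalerDr scalerA.
rewrite big_split /=.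
rewrite big_nat_recr //= dco_gt // scale0r addr0.
rewrite big_nat_recl //= mul0r mulr0 scale0r add0r.
under [X in _ = X]eq_bigr => p _ do rewrite scalerDl.
rewrite big_split /=.
rewrite big_nat_recl //= scale0r add0r.
rewrite [X in _ = _ + X]big_nat_recr //= dco_gt // ?mulr0 ?scale0r ?addr0.
  congr (_ + _); apply: eq_bigr => p _; by rewrite mulrC.
lia.
Qed.

Lemma fact_neq0 n : (n`!)%:R != 0 :> rat.
Proof. by rewrite pnatr_eq0 -lt0n fact_gt0. Qed.

Lemma n1_neq0 n : 1 + n%:R != 0 :> rat.
Proof. by rewrite addrC natr1 pnatr_eq0. Qed.
Lemma two_exp_neq0 k : 2 ^+ k != 0 :> rat.
Proof. by rewrite expf_neq0 // pnatr_eq0. Qed.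
Lemma posS n : 0 < n%:R + 1 :> rat.
Proof. have := ler0n rat n; lra. Qed.
Lemma posSS n : 0 < n%:R + 1 + 1 :> rat.
Proof. have := ler0n rat n; lra. Qed.
Lemma posF n : 0 < (n`!)%:R :> rat.
Proof. by rewrite ltr0n fact_gt0. Qed.
Lemma pos2 : 0 < 0 + 1 + 1 :> rat.
Proof. lra. Qed.
Ltac sidec2 := repeat (apply/andP; split); apply: lt0r_neq0;
  rewrite ?exprn_gt0 ?posS ?posSS ?posF ?pos2 //.
Ltac sidec := repeat (apply/andP; split);
  rewrite ?n1_neq0 ?two_exp_neq0 ?fact_neq0 ?pnatr_eq0 //.

Lemma dco_closed N :
  (forall q s, N = (q + s.*2)%N ->
     dco N q = (N`!)%:R / ((q`! * s`! * 2 ^ s.*2)%N)%:R) /\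
  (forall q s, N = (q + s.*2).+1 -> dco N q = 0).
Proof.
elim: N => [|N [IHe IHo]].
  split=> [[|q] [|s]|q s] //= _.
split.
- move=> [|q] [|s] //= E.
  +
    have EN : N = (1 + s.*2)%N by move: E; rewrite add0n doubleS; case.
    rewrite add0r (IHe 1%N s EN) EN.
    have H2 : ((1 + s.*2).+1)%:R = 2%:R * (s.+1)%:R :> rat.
      by rewrite -natrM; congr (_%:R); lia.
    rewrite [((1 + s.*2).+1)`!]factS fact0 [(s.+1)`!]factS doubleS !expnS.
    rewrite !natrM !natrX H2.
    have := fact_neq0 s; have := fact_neq0 (1 + s.*2).
    have : (s.+1)%:R != 0 :> rat by rewrite pnatr_eq0.
    move=> h1 h2 h3. field. sidec.
  +
    rewrite addn0 in E; case: E => EN.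
    rewrite (@dco_gt N q.+2) ?mulr0 ?addr0; last by rewrite EN.
    rewrite (IHe q 0%N) ?addn0 // EN /= !expn0 !muln1 !divff ?fact_neq0 //.
  + have EN : N = (q + s.*2.+2)%N by move: E; rewrite doubleS addSn; case.
    rewrite (IHe q s.+1) ?doubleS // (IHe q.+2 s); last by rewrite EN !addnS addSn.
    have HN : N%:R = q%:R + 2%:R * s%:R + 2%:R :> rat.
      by rewrite EN -natrM -!natrD; congr (_%:R); lia.
    rewrite [(N.+1)`!]factS [(q.+1)`!]factS [(q.+2)`!]factS [(q.+1)`!]factS [(s.+1)`!]factS.
    rewrite !expnS !natrM !natrX -!natr1 HN.
    field. sidec2.
- move=> q s E /=.
  have EN : N = (q + s.*2)%N by case: E.
  clear E.
  case: q EN => [|q] EN.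
  + rewrite add0r; case: s EN => [|s] EN.
      by rewrite dco_gt ?mulr0 // EN.
    by rewrite (IHo 1%N s) ?mulr0 // EN; lia.
  + rewrite (IHo q s); last by rewrite EN; lia.
    case: s EN => [|s] EN.
      by rewrite dco_gt ?mulr0 ?addr0 // EN; lia.
    by rewrite (IHo q.+2 s) ?mulr0 ?addr0 // EN; lia.
Qed.

Lemma dco_NN N : dco N N = 1.
Proof.
have [H _] := dco_closed N.
by rewrite (H N 0%N) ?addn0 //= expn0 !muln1 divff // fact_neq0.
Qed.

Lemma hb_sum N K l : (N < K)%N ->
  \sum_(0 <= p < K) dco N p * hb p l = (l == N)%:R.
Proof.
move=> HK; have := congr1 (fun P : {poly rat} => P`_l) (@Xn_expand N K HK).
rewrite coefXn coef_sum => ->; apply: eq_bigr => p _; by rewrite coefZ.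
Qed.

Lemma detHM a m :
  \det (\matrix_(rho < m, c < m) hb (a + 1 + c) (a + rho)) =
  (-1) ^+ m * dco (a + m) a.
Proof.
case: m => [|m]; first by rewrite det_mx00 expr0 mul1r addn0 dco_NN.
set M := \matrix_(_ < _, _ < _) _.
set N := (a + m.+1)%N.
pose x : 'cV[rat]_(m.+1) := \col_c dco N (a + 1 + c).
have Mx : M *m x = \col_i (if i == ord0 then - dco N a else 0).
  apply/matrixP => i j; rewrite !mxE.
  have := hb_sum N N.+1 (a + i) (ltnSn N).
  rewrite (@big_cat_nat _ _ _ (a + 1)) //=; last by rewrite /N; lia.
  rewrite addn1 big_nat_recr //= [X in X + _ + _]big_nat_cond big1 ?add0r; last first.
    by move=> p /andP[/andP[_ Hp] _]; rewrite hb_gt ?mulr0 //; lia.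
  rewrite -{1}[a.+1]add0n big_addn.
  have -> : (N.+1 - a.+1 = m.+1)%N by rewrite /N; lia.
  rewrite big_mkord.
  have Hio := ltn_ord i.
  have -> : (a + i == N) = false by apply/negbTE; rewrite /N; lia.
  case: (i =P ord0) => [-> | Hi].
    rewrite addn0 hbpp mulr1 /= mulr0n => /eqP; rewrite addrC addr_eq0 => /eqP <-.
    apply: eq_bigr => c _; rewrite !mxE mulrC; do 2 f_equal; rewrite ?addn0 //; lia.
  rewrite hb_gt ?mulr0 ?addr0; last first.
    have : (0 < i)%N by rewrite lt0n; apply/eqP => H0; apply: Hi; exact: val_inj.
    lia.
  rewrite /= mulr0n => H.
  rewrite -[RHS]H add0r; apply: eq_bigr => c _; rewrite !mxE mulrC; do 2 f_equal; rewrite ?addn0 //; lia.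
have := congr1 (fun A => (\adj M *m A) ord_max 0) Mx.
rewrite /= mulmxA mul_adj_mx mul_scalar_mx !mxE.
have -> : (a + 1 + @ord_max m = N)%N by rewrite /N /= -addnA add1n.
rewrite dco_NN mulr1 => ->.
rewrite big_ord_recl big1 ?addr0; last first.
  by move=> i _; rewrite !mxE mulr0.
rewrite !mxE eqxx /cofactor /=.
have -> : \det (row' ord0 (col' ord_max M)) = 1.
  rewrite -det_tr det_trig.
    apply: big1 => i _; rewrite !mxE lift0 lift_max.
    have -> : (a + i.+1 = a + 1 + i)%N by lia.
    exact: hbpp.
  apply/forallP => i; apply/forallP => j; apply/implyP => Hij.
  rewrite !mxE lift0 lift_max hb_gt //.
  move: (nat_of_ord i) (nat_of_ord j) Hij => u v; lia.
change ((-1) ^+ m * 1 * - dco N a = (-1) ^+ m.+1 * dco N a).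
rewrite exprS; ring.
Qed.

Theorem lemma6 (n k j r : nat) :
  (1 <= k)%N -> (k <= n)%N -> (1 <= r)%N -> (j + r <= k)%N ->
  Ekn k n (j + r - 1) =
  (if odd (k - j - r) then 0
   else (n`!)%:R /
        (((n - k + j + r)`! * ((k - j - r)./2)`! * 2 ^ (k - j - r))%N)%:R).
Proof.
move=> Hk Hkn Hr Hjr.
rewrite /Ekn.
set t := (j + r - 1)%N.
have E := detHM (n - k + t + 1)%N (k - t - 1)%N.
rewrite (_ : \matrix_(rho < _, c < _) _ =
   \matrix_(rho < (k - t - 1)%N, c < (k - t - 1)%N)
      hb (n - k + t + 1 + 1 + c) (n - k + t + 1 + rho)); last first.
  apply/matrixP => i l; rewrite !mxE; congr hb; lia.
rewrite E.
have Hm : (k - t - 1 = k - j - r)%N by rewrite /t; lia.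
have Ha : (n - k + t + 1 = n - k + j + r)%N by rewrite /t; lia.
have Hn : (n - k + j + r + (k - j - r) = n)%N by lia.
rewrite Ha Hm Hn.
set a := (n - k + j + r)%N.
set m := (k - j - r)%N.
have Hod := odd_double_half m.
have [He Ho] := dco_closed n.
case: (odd m) Hod => /= Hod.
  by rewrite (Ho a m./2) ?mulr0 //; rewrite -Hn -Hod; lia.
rewrite add0n in Hod.
rewrite (He a m./2); last by rewrite Hod Hn.
have -> : (-1) ^+ m = 1 :> rat by rewrite -Hod -mul2n exprM; rewrite (_ : (-1) ^+ 2 = 1 :> rat) ?expr1n //; ring.
rewrite mul1r.
by rewrite Hod.
Qed.
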